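(* Let $F$ be a field, $U,V$ finite-dimensional $F$-vector spaces of dimensions $n$ and $m$, and $A:U\times U\to V$ an alternating bilinear map whose image spans $V$. If $m>2$ and $n>m+1$, then there exists a basis $\{u_1,\dots,u_n\}$ of $U$, ordered $u_1<\dots<u_n$, such that the associated set $\mathcal{B}$ (constructed as in the context) is either not a tree of height one, or else satisfies all of the following: (1) $\mathcal{B}=\{\{1,2\},\{1,3\},\dots,\{1,m+1\}\}$; (2) $A(u_1,u_i)=0$ for all $i$ with $m+2\le i\le n$; (3) $A(u_i,u_j)=0$ for all $i,j$ with $m+1<i<j\le n$; (4) $A(u_i,u_j)\in\operatorname{span}\{A(u_1,u_i)\}$ for all $i,j$ with $2\le i\le m+1<j\le n$.
   Context: Given a basis $u_1<\dots<u_n$ of $U$: $\mathcal{Y}$ is the set of $2$-element subsets of $\{1,\dots,n\}$, totally ordered by $\{i,j\}<\{r,s\}$ iff $\max\{i,j\}<\max\{r,s\}$, or the maxima are equal to $a$ and the remaining element of $\{i,j\}\setminus\{a\}$ is smaller than that of $\{r,s\}\setminus\{a\}$. Starting from $\mathcal{B}_0=\emptyset,B_0=\emptyset$, inductively let $\{i,j\}$ ($i<j$) be the least element of $\mathcal{Y}$ with $A(u_i,u_j)\notin\operatorname{span}(B_k)$ and set $\mathcal{B}_{k+1}=\mathcal{B}_k\cup\{\{i,j\}\}$, $B_{k+1}=B_k\cup\{A(u_i,u_j)\}$; stop at $k=m$ and put $\mathcal{B}=\mathcal{B}_m$. The set $\mathcal{B}$ is a tree of height one if there is an $i\in\{1,\dots,n\}$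 with $i\in\{j,l\}$ for every $\{j,l\}\in\mathcal{B}$. *)

(* Defs.v *)
From HB Require Import structures.
From mathcomp Require Import all_boot all_order all_algebra.
Set Implicit Arguments. Unset Strict Implicit. Unset Printing Implicit Defensive.
Import GRing.Theory.
Local Open Scope ring_scope.

(* Indices are 0-based: the paper's u_k is b`_(k-1), the paper's pair {i,j}
   (i<j) is the nat pair (i-1, j-1). *)

(* The set Y of 2-element subsets of {0,..,n-1}, as pairs (i,j) with i<j,
   listed in the paper's total order: by max j, then by the other element i. *)
Definition Ypairs (n : nat) : seq (nat * nat) :=
  [seq (i, j) | j <- iota 0 n, i <- iota 0 j].

Section Greedy.
Variables (F : fieldType) (U V : vectType F) (A : U -> U -> V).
Variables (n : nat) (b : n.-tuple U).

Definition Aval (p : nat * nat) : V := A b`_p.1 b`_p.2.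

Definition greedy_step (Bk : seq (nat * nat)) : seq (nat * nat) :=
  let P := fun p => Aval p \notin <<map Aval Bk>>%VS in
  rcons Bk (nth (0%N, 0%N) (Ypairs n) (find P (Ypairs n))).

Definition greedyB (m : nat) : seq (nat * nat) := iter m greedy_step [::].
End Greedy.

Definition tree_height_one (n : nat) (B : seq (nat * nat)) : Prop :=
  exists i, (i < n)%N /\ forall p, p \in B -> i = p.1 \/ i = p.2.

(* Main.v *)
Require Import Defs.
From HB Require Import structures.
From mathcomp Require Import all_boot all_order all_algebra.
From Stdlib Require Import Classical Lia.
From mathcomp Require Import zify.
Import GRing.Theory.
Local Open Scope ring_scope.

Section VS.
Set Implicit Arguments. Unset Strict Implicit.
Variables (K : fieldType) (vT : vectType K).
Implicit Types (a b c u v w : vT).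

Lemma free2 u v : free [:: u; v] = (u != 0) && (v \notin <[u]>%VS).
Proof.
have P : perm_eq [:: u; v] [:: v; u] := permEl (perm_catC [:: u] [:: v]).
by rewrite (perm_free P) free_cons span_seq1 seq1_free andbC.
Qed.

Lemma free3 a b c : free [:: a; b; c] ->
  [/\ a \notin <<[:: b; c]>>%VS, b \notin <<[:: a; c]>>%VS & c \notin <<[:: a; b]>>%VS].
Proof.
move=> fr.
have P1 : perm_eq [:: a; b; c] [:: b; a; c] := permEl (perm_catCA [:: a] [:: b] [:: c]).
have P2 : perm_eq [:: a; b; c] [:: c; a; b] := permEl (perm_catC [:: a; b] [:: c]).
move: (fr); rewrite free_cons => /andP[-> _].
move: (fr); rewrite (perm_free P1) free_cons => /andP[-> _].
by move: (fr); rewrite (perm_free P2) free_cons => /andP[-> _].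
Qed.

Lemma span2 a b : <<[:: a; b]>>%VS = (<[a]> + <[b]>)%VS.
Proof. by rewrite span_cons span_seq1. Qed.

Lemma CAP a b c v : free [:: b; a; c] -> v \in <<[:: a; b]>>%VS ->
  v \in <<[:: a; c]>>%VS -> v \in <[a]>%VS.
Proof.
rewrite free_cons => /andP[nb _].
rewrite !span2 => /memv_addP[x xa [y /vlineP[k ->] ->]].
move=> /memv_addP[x' x'a [z zc eq]].
have [->|k0] := eqVneq k 0; first by rewrite scale0r addr0.
exfalso; apply: (negP nb).
have -> : b = k^-1 *: (x' + z - x) by rewrite -eq addrC addKr scalerA mulVf // scale1r.
rewrite span2; apply: memvZ; apply: memvB; last by apply: (subvP (addvSl _ _)).
by apply: memv_add.
Qed.

Lemma notin_take (e : seq vT) k : free e -> (k < size e)%N -> e`_k \notin <<take k e>>%VS.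
Proof.
move=> fe ke.
have : free (take k.+1 e) by apply: (@catl_free _ _ (drop k.+1 e)); rewrite cat_take_drop.
by rewrite (take_nth 0 ke) (perm_free (permEl (perm_rcons _ _))) free_cons => /andP[].
Qed.

Lemma free_pair (e : seq vT) i j : free e -> (i < j)%N -> (j < size e)%N ->
  free [:: e`_i; e`_j].
Proof.
move=> fe ij je; rewrite free2.
have ie : (i < size e)%N by apply: ltn_trans ij je.
rewrite (free_not0 fe (mem_nth _ ie)) /=.
apply/negP => /vlineP[k hk]; move/negP: (@notin_take e j fe je); apply; rewrite hk.
apply: memvZ; apply: memv_span.
by rewrite -(nth_take 0 ij); apply: mem_nth; rewrite size_take je.
Qed.

Lemma ext_basis (s : seq vT) : free s -> basis_of fullv (s ++ vbasis (<<s>>^C)%VS).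
Proof.
move=> fs; rewrite basisEdim span_cat (span_basis (vbasisP _)) addv_complf subvv /=.
rewrite size_cat size_tuple dimv_compl (eqP fs).
have : (\dim <<s>> <= \dim (fullv : {vspace vT}))%N by apply: dimvS; apply: subvf.
rewrite (eqP fs) dimvf => h. by rewrite subnKC.
Qed.

Lemma basis_size (X : seq vT) : basis_of fullv X -> size X = \dim (fullv : {vspace vT}).
Proof. by move=> h; rewrite (size_basis (X := in_tuple X)). Qed.

End VS.

Section Main.
Set Implicit Arguments. Unset Strict Implicit.
Variables (F : fieldType) (U V : vectType F) (A : U -> U -> V).
Hypothesis hlinl : forall (a : F) (x y z : U), A (a *: x + y) z = a *: A x z + A y z.
Hypothesis hlinr : forall (a : F) (x y z : U), A z (a *: x + y) = a *: A z x + A z y.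
Hypothesis halt : forall x : U, A x x = 0.
Hypothesis hspan : forall W : {vspace V}, (forall x y : U, A x y \in W) -> W = fullv.

Definition Ar (x : U) : {linear U -> V} :=
  HB.pack (A x) (GRing.isLinear.Build F U V *:%R (A x) (fun a y z => hlinr a y z x)).
Definition Al (x : U) : {linear U -> V} :=
  HB.pack (A^~ x) (GRing.isLinear.Build F U V *:%R (A^~ x) (fun a y z => hlinl a y z x)).

Lemma ADr x y z : A x (y + z) = A x y + A x z. Proof. exact: (linearD (Ar x)). Qed.
Lemma ABr x y z : A x (y - z) = A x y - A x z. Proof. exact: (linearB (Ar x)). Qed.
Lemma A0r x : A x 0 = 0. Proof. exact: (linear0 (Ar x)). Qed.
Lemma ADl x y z : A (y + z) x = A y x + A z x. Proof. exact: (linearD (Al x)). Qed.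
Lemma ABl x y z : A (y - z) x = A y x - A z x. Proof. exact: (linearB (Al x)). Qed.
Lemma A0l x : A 0 x = 0. Proof. exact: (linear0 (Al x)). Qed.
Lemma Aanti x y : A y x = - A x y.
Proof.
have := halt (x + y); rewrite ADl !ADr !halt add0r addr0 => /eqP.
by rewrite addr_eq0 => /eqP ->; rewrite opprK.
Qed.

Definition img x := limg (linfun (Ar x)).
Lemma img_mem x t : A x t \in img x.
Proof. by have := memv_img (linfun (Ar x)) (memvf t); rewrite lfunE. Qed.

Definition Tprop := forall x y z, ~~ free [:: A x y; A x z; A y z].

Lemma Tl (hT : Tprop) x y z a b : A x y = a -> A x z = b -> free [:: a; b] ->
  A y z \in <<[:: a; b]>>%VS.
Proof.
move=> <- <- fr; have := hT x y z.
have P : perm_eq [:: A x y; A x z; A y z] [:: A y z; A x y; A x z] :=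
  permEl (perm_catC [:: A x y; A x z] [:: A y z]).
by rewrite (perm_free P) free_cons fr andbT negbK.
Qed.

Lemma Tin (hT : Tprop) x p q : free [:: A x p; A x q] -> A p q \in img x.
Proof.
move=> fr; apply: (subvP _ _ (Tl hT erefl erefl fr)).
apply/span_subvP => w; rewrite !inE => /orP[/eqP->|/eqP->]; exact: img_mem.
Qed.

Lemma G1 (hT : Tprop) x y z (fr : free [:: A x y; A x z]) p q :
  A x p != 0 -> A p q \in img x.
Proof.
move=> ap.
case: (boolP (free [:: A x p; A x q])) => fpq; first exact: Tin.
have [r hr] : exists r, A x r \notin <[A x p]>%VS.
  case: (boolP (A x y \in <[A x p]>%VS)) => hy; last by exists y.
  case: (boolP (A x z \in <[A x p]>%VS)) => hz; last by exists z.
  exfalso; move: fr; rewrite free2 => /andP[ny nz].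
  case/vlineP: hy => k hk; case/vlineP: hz => l hl.
  have k0 : k != 0 by apply: contraNneq ny => k0; rewrite hk k0 scale0r.
  apply: (negP nz); apply/vlineP; exists (l / k).
  by rewrite hl hk scalerA divfK.
have hq : A x q \in <[A x p]>%VS.
  by move: fpq; rewrite free2 ap /= negbK.
have f1 : free [:: A x p; A x (q + r)].
  rewrite free2 ap /= ADr; apply: contra hr => h.
  by rewrite -(addKr (A x q) (A x r)); apply: memvD => //; rewrite memvN.
have f2 : free [:: A x p; A x r] by rewrite free2 ap hr.
have -> : A p q = A p (q + r) - A p r by rewrite ADr addrK.
by apply: memvB; apply: Tin.
Qed.

Lemma R2 (hT : Tprop) x y z (fr : free [:: A x y; A x z]) p q : A p q \in img x.
Proof.
case: (boolP (A x p == 0)) => ap; last exact: (G1 hT fr).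
case: (boolP (A x q == 0)) => aq; last first.
  by rewrite Aanti memvN; apply: (G1 hT fr).
have ay : A x y != 0 by move: fr; rewrite free2 => /andP[].
have -> : A p q = A (p + y) q - A y q by rewrite ADl addrK.
apply: memvB; apply: (G1 hT fr) => //.
by rewrite ADr (eqP ap) add0r.
Qed.

Lemma line_opp (w : V) : (<[- w]> = <[w]>)%VS.
Proof.
apply/eqP; rewrite eqEsubv; apply/andP; split; apply/subvP => v /vlineP[k ->];
  apply/vlineP; exists (- k); by rewrite scalerN scaleNr ?opprK.
Qed.

Lemma full_img (hT : Tprop) (hm : (1 < \dim (fullv : {vspace V}))%N) :
  exists x, img x = fullv.
Proof.
case: (classic (exists x y z, free [:: A x y; A x z])) => [[x [y [z fr]]]|N].
  by exists x; apply: hspan => p q; apply: (R2 hT fr).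
exfalso.
have N' : forall x y z, A x y != 0 -> A x z \in <[A x y]>%VS.
  move=> x y z nz; apply/negPn/negP => h; apply: N; exists x, y, z.
  by rewrite free2 nz h.
case: (classic (exists x y, A x y != 0)) => [[x0 [y0 nz]]|Z]; last first.
  have : (0%VS : {vspace V}) = fullv.
    apply: hspan => p q; rewrite memv0; apply/negPn/negP => h; apply: Z; by exists p, q.
  by move=> h; move: hm; rewrite -h dimv0.
set w := A x0 y0 in nz.
have hy0 : forall t, A y0 t \in <[w]>%VS.
  move=> t; rewrite -line_opp; have := N' y0 x0 t; rewrite Aanti; apply.
  by rewrite oppr_eq0.
have all : forall p q, A p q \in <[w]>%VS.
  move=> p q; apply/negPn/negP => npq.
  have apq : A p q != 0 by apply: contraNneq npq => ->; rewrite mem0v.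
  have h3 : A p y0 = 0.
    case/vlineP: (N' p q y0 apq) => k hk.
    have [k0|k0] := eqVneq k 0; first by rewrite hk k0 scale0r.
    exfalso; apply: (negP npq).
    have -> : A p q = k^-1 *: A p y0 by rewrite hk scalerA mulVf // scale1r.
    by apply: memvZ; rewrite Aanti memvN.
  have h4 : A (x0 + p) y0 = w by rewrite ADl h3 addr0.
  have h5 : A (x0 + p) q \in <[w]>%VS.
    by have := N' (x0 + p) y0 q; rewrite h4; apply.
  apply: (negP npq).
  have -> : A p q = A (x0 + p) q - A x0 q by rewrite ADl addrAC subrr add0r.
  apply: memvB => //; rewrite -/w; apply: N' nz.
have := hspan all; move=> h; move: hm; rewrite -h dim_vline nz.
by [].
Qed.


Lemma pre u1 (hu : img u1 = fullv) v : exists t, A u1 t = v.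
Proof.
have : v \in img u1 by rewrite hu memvf.
by case/memv_imgP => t _ ->; exists t; rewrite lfunE.
Qed.

Lemma ext3 (hm : (2 < \dim (fullv : {vspace V}))%N) (a : V) : a != 0 ->
  exists b c, free [:: a; b; c].
Proof.
move=> a0.
have B := ext_basis (s := [:: a]) ltac:(by rewrite seq1_free).
have S := basis_size B; have fB := basis_free B.
move: S fB; rewrite /=; move: (tval _) => t.
case: t => [|b [|c t']] /= S; try by rewrite -S in hm.
by move=> fB; exists b, c; exact: (@catl_free _ _ t' [:: a; b; c]).
Qed.

Lemma perm3 (a b c : V) : free [:: a; b; c] -> free [:: b; a; c].
Proof.
have P1 : perm_eq [:: a; b; c] [:: b; a; c] := permEl (perm_catCA [:: a] [:: b] [:: c]).
by rewrite (perm_free P1).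
Qed.

Lemma P4 (hT : Tprop) u1 (hu : img u1 = fullv)
  (hm : (2 < \dim (fullv : {vspace V}))%N) y z :
  A u1 y != 0 -> A u1 z = 0 -> A y z \in <[A u1 y]>%VS.
Proof.
move=> a0 hz.
have aux : forall b r, A u1 r = b -> free [:: A u1 y; b] ->
    A y z \in <<[:: A u1 y; b]>>%VS.
  move=> b r hr fr.
  have h1 := Tl hT (x := u1) (y := y) (z := z + r) erefl
     ltac:(by rewrite ADr hz add0r hr) fr.
  have h2 := Tl hT (x := u1) (y := y) (z := r) erefl hr fr.
  have -> : A y z = A y (z + r) - A y r by rewrite ADr addrK.
  exact: memvB.
have [b [c f3]] := ext3 hm a0.
have [r hr] := pre hu b; have [r' hr'] := pre hu c.
have fab : free [:: A u1 y; b] := @catl_free _ _ [:: c] [:: A u1 y; b] f3.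
have fbac := perm3 f3.
have fac : free [:: A u1 y; c] := @catr_free _ _ [:: b] [:: A u1 y; c] fbac.
exact: (CAP fbac (aux _ _ hr fab) (aux _ _ hr' fac)).
Qed.

Lemma P3 (hT : Tprop) u1 (hu : img u1 = fullv)
  (hm : (2 < \dim (fullv : {vspace V}))%N) y z :
  A u1 y = 0 -> A u1 z = 0 -> A y z = 0.
Proof.
move=> hy hz.
have D : forall a' b' p' q', A u1 p' = a' -> A u1 q' = b' -> free [:: a'; b'] ->
    A y z \in <<[:: a'; b']>>%VS.
  move=> a' b' p' q' hp hq fr.
  move: (fr); rewrite free2 => /andP[na nbl].
  have nb0 : b' != 0 by apply: contraNneq nbl => ->; rewrite mem0v.
  have h1 := Tl hT (x := u1) (y := y + p') (z := z + q')
     ltac:(by rewrite ADr hy add0r hp) ltac:(by rewrite ADr hz add0r hq) fr.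
  have h2 : A y q' \in <<[:: a'; b']>>%VS.
    rewrite Aanti memvN span2; apply: (subvP (addvSr _ _)).
    by have := P4 hT hu hm (y := q') (z := y); rewrite hq; apply.
  have h3 : A p' z \in <<[:: a'; b']>>%VS.
    rewrite span2; apply: (subvP (addvSl _ _)).
    by have := P4 hT hu hm (y := p') (z := z); rewrite hp; apply.
  have h4 := Tl hT (x := u1) (y := p') (z := q') hp hq fr.
  have -> : A y z = A (y + p') (z + q') - (A y q' + (A p' z + A p' q')).
    by rewrite ADl !ADr -[X in X - _]addrA addrK.
  by apply: memvB => //; apply: memvD => //; apply: memvD.
have [a0 [t0 ht0]] : exists a, exists t, A u1 t = a /\ a != 0.
  pose e := vbasis (fullv : {vspace V}).
  have ne : e`_0 != 0.
    apply: (free_not0 (basis_free (vbasisP _))); apply: mem_nth.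
    by rewrite size_tuple; apply: ltn_trans hm.
  have [t ht] := pre hu e`_0; by exists e`_0, t.
case: ht0 => ht0 na0.
have [b [c f3]] := ext3 hm na0.
have [p hp] := pre hu b; have [q hq] := pre hu c.
have fab : free [:: a0; b] := @catl_free _ _ [:: c] [:: a0; b] f3.
have fbac := perm3 f3.
have fac : free [:: a0; c] := @catr_free _ _ [:: b] [:: a0; c] fbac.
have fbc : free [:: b; c] := @catr_free _ _ [:: a0] [:: b; c] f3.
have := CAP fbac (D _ _ _ _ ht0 hp fab) (D _ _ _ _ ht0 hq fac).
case/vlineP => k hk.
have hbc := D _ _ _ _ hp hq fbc.
have [k0|k0] := eqVneq k 0; first by rewrite hk k0 scale0r.
have [na _ _] := free3 f3.
exfalso; apply: (negP na).
have -> : a0 = k^-1 *: A y z by rewrite hk scalerA mulVf // scale1r.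
exact: memvZ.
Qed.


Lemma freeU x y z : free [:: A x y; A x z; A y z] -> free [:: x; y; z].
Proof.
move=> fr; have [n1 n2 n3] := free3 fr.
have nz : forall v, v \in [:: A x y; A x z; A y z] -> v != 0 := fun v => free_not0 fr.
have AZl : forall (k : F) (p q : U), A (k *: p) q = k *: A p q.
  by move=> k p q; have := hlinl k p 0 q; rewrite addr0 A0l addr0.
have AZr : forall (k : F) (p q : U), A p (k *: q) = k *: A p q.
  by move=> k p q; have := hlinr k q 0 p; rewrite addr0 A0r addr0.
rewrite free_cons free2; apply/and3P; split.
- apply/negP; rewrite span2 => /memv_addP[u /vlineP[k ->] [v /vlineP[l ->] ex]].
  apply: (negP n1).
  have -> : A x y = (- l) *: A y z by rewrite ex ADl AZl AZl halt scaler0 add0r Aanti scalerN scaleNr.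
  by apply: memvZ; apply: memv_span; rewrite !inE eqxx orbT.
- apply/negP => /eqP y0; have := nz (A x y) (mem_head _ _); by rewrite y0 A0r eqxx.
- apply/negP => /vlineP[k zk].
  have := nz (A y z) ltac:(by rewrite !inE eqxx !orbT).
  by rewrite zk AZr halt scaler0 eqxx.
Qed.

End Main.

Lemma Ysplit k N : (k.+1 < N)%N -> exists rest, Ypairs N = Ypairs k.+1 ++ (0%N, k.+1) :: rest.
Proof.
move=> kN; rewrite /Ypairs.
have -> : N = (k.+1 + (N - k.+1))%N by rewrite subnKC // ltnW.
case E: (N - k.+1)%N => [|r]; first by move: kN; rewrite -subn_gt0 E.
rewrite iotaD map_cat flatten_cat add0n /=.
by eexists.
Qed.

Lemma memY p N : p \in Ypairs N -> (p.1 < p.2 < N)%N.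
Proof.
rewrite /Ypairs => /flatten_mapP[j]; rewrite mem_iota add0n => /andP[_ jN] /mapP[i].
by rewrite mem_iota add0n => /andP[_ ij] -> /=; rewrite ij jN.
Qed.

Lemma step_eq (F : fieldType) (U V : vectType F) (A : U -> U -> V) n (b : n.-tuple U)
  Bk s1 p s2 : Ypairs n = s1 ++ p :: s2 ->
  all (fun q => Aval A b q \in <<map (Aval A b) Bk>>%VS) s1 ->
  Aval A b p \notin <<map (Aval A b) Bk>>%VS -> greedy_step A b Bk = rcons Bk p.
Proof.
move=> hY hall hp; rewrite /greedy_step hY find_cat.
have -> : has (fun q => Aval A b q \notin <<map (Aval A b) Bk>>%VS) s1 = false.
  apply/negbTE; apply/hasPn => q hq; rewrite negbK; exact: (allP hall).
by rewrite /= hp addn0 nth_cat ltnn subnn.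
Qed.

Lemma iter_sub (F : fieldType) (U V : vectType F) (A : U -> U -> V) n (b : n.-tuple U)
  k B0 p : p \in B0 -> p \in iter k (greedy_step A b) B0.
Proof.
move=> h; elim: k => //= k IH; by rewrite /greedy_step mem_rcons inE IH orbT.
Qed.

Theorem proposition2p3 (F : fieldType) (U V : vectType F) (n m : nat)
  (A : U -> U -> V)
  (hdimU : \dim (fullv : {vspace U}) = n)
  (hdimV : \dim (fullv : {vspace V}) = m)
  (hlinl : forall (a : F) (x y z : U), A (a *: x + y) z = a *: A x z + A y z)
  (hlinr : forall (a : F) (x y z : U), A z (a *: x + y) = a *: A z x + A z y)
  (halt : forall x : U, A x x = 0)
  (hspan : forall W : {vspace V}, (forall x y : U, A x y \in W) -> W = fullv)
  (hm : (2 < m)%N) (hn : (m + 1 < n)%N) :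
  exists b : n.-tuple U, basis_of fullv b /\
    let B := greedyB A b m in
    ~ tree_height_one n B \/
    [/\ B =i [seq (0%N, k) | k <- iota 1 m],
        (forall i, (m + 1 <= i < n)%N -> A b`_0 b`_i = 0),
        (forall i j, (m < i)%N -> (i < j)%N -> (j < n)%N -> A b`_i b`_j = 0)
      & (forall i j, (1 <= i <= m)%N -> (m < j < n)%N ->
           A b`_i b`_j \in <[A b`_0 b`_i]>%VS)].
Proof.
have hm1 : (1 < \dim (fullv : {vspace V}))%N by rewrite hdimV ltnW.
have hm2 : (2 < \dim (fullv : {vspace V}))%N by rewrite hdimV.
case: (classic (exists x y z, free [:: A x y; A x z; A y z])) => [[x [y [z fr]]]|NT].
  have fxyz := freeU hlinl hlinr halt fr.
  pose s := [:: x; y; z] ++ vbasis (<<[:: x; y; z]>>^C)%VS.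
  have B : basis_of fullv s := ext_basis fxyz.
  have hs : size s == n by rewrite (basis_size B) hdimU.
  exists (Tuple hs); split => //.
  left => -[i [_ hi]].
  have [n1 n2 n3] := free3 fr.
  have f2 : free [:: A x y; A x z] := @catl_free _ _ [:: A y z] [:: A x y; A x z] fr.
  move: f2; rewrite free2 => /andP[nxy nxz].
  have [rest hY] := Ysplit (k := 2) (N := n) ltac:(lia).
  have G3 : iter 3 (greedy_step A (Tuple hs)) [::] = [:: (0,1); (0,2); (1,2)]%N.
    have e1 : greedy_step A (Tuple hs) [::] = [:: (0,1)]%N.
      apply: (@step_eq _ _ _ _ _ _ _ [::] (0,1)%N ((0,2) :: (1,2) :: (0,3) :: rest)%N) => //.
      by rewrite /Aval /= span_nil memv0.
    have e2 : greedy_step A (Tuple hs) [:: (0,1)]%N = [:: (0,1); (0,2)]%N.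
      apply: (@step_eq _ _ _ _ _ _ _ [:: (0,1)]%N (0,2)%N ((1,2) :: (0,3) :: rest)%N) => //.
        by rewrite /= /Aval /= andbT span_seq1 memv_line.
      by rewrite /Aval /= span_seq1.
    have e3 : greedy_step A (Tuple hs) [:: (0,1); (0,2)]%N = [:: (0,1); (0,2); (1,2)]%N.
      apply: (@step_eq _ _ _ _ _ _ _ [:: (0,1); (0,2)]%N (1,2)%N ((0,3) :: rest)%N) => //.
      by rewrite /= /Aval /= !andbT; apply/andP; split; apply: memv_span; rewrite !inE eqxx ?orbT.
    by rewrite /= e1 e2 e3.
  have mem3 : forall p, p \in [:: (0,1); (0,2); (1,2)]%N -> p \in greedyB A (Tuple hs) m.
    by move=> p hp; rewrite /greedyB -(subnK hm) iterD G3; exact: iter_sub.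
  have h1 := hi _ (mem3 (0,1)%N ltac:(by rewrite !inE eqxx)).
  have h2 := hi _ (mem3 (0,2)%N ltac:(by rewrite !inE eqxx ?orbT)).
  have h3 := hi _ (mem3 (1,2)%N ltac:(by rewrite !inE eqxx ?orbT)).
  simpl in h1, h2, h3; lia.
have hT : Tprop A by move=> x y z; apply/negP => fr; apply: NT; exists x, y, z.
have [u1 hu] := full_img hlinl hlinr halt hspan hT hm1.
pose f := linfun (Ar hlinr u1).
have hf : forall t, f t = A u1 t := lfunE (Ar hlinr u1).
pose e := vbasis (fullv : {vspace V}).
have fe : free e := basis_free (vbasisP _).
have se : size e = m by rewrite size_tuple.
have hlf : limg f = fullv := hu.
have hfinv : forall v, A u1 ((f^-1)%VF v) = v.
  by move=> v; rewrite -hf limg_lfunVK // hlf memvf.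
have enz : forall k, (k < m)%N -> e`_k != 0.
  by move=> k km; apply: (free_not0 fe); apply: mem_nth; rewrite se.
have u1nz : u1 != 0.
  apply/eqP => u0; have := hfinv e`_0; rewrite u0 (A0l hlinl) => e0.
  by have := enz 0%N (ltnW (ltnW hm)); rewrite -e0 eqxx.
pose K := lker f. pose C := (<[u1]>^C)%VS.
pose qs := vbasis (K :&: C)%VS. pose ps := map (f^-1)%VF e.
pose s := u1 :: ps ++ qs.
have u1K : u1 \in K by rewrite memv_ker hf halt.
have B : basis_of fullv s.
  rewrite basisEdim; apply/andP; split.
    apply/subvP => v _.
    pose w := v - (f^-1)%VF (A u1 v).
    have wK : w \in K by rewrite memv_ker hf /w (ABr hlinr) hfinv subrr.
    have : w \in (<[u1]> + C)%VS by rewrite addv_complf memvf.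
    case/memv_addP => k1 k1u [c cC wE].
    have cK : c \in K.
      have -> : c = w - k1 by rewrite wE addrAC subrr add0r.
      by apply: memvB => //; apply: (subvP u1K).
    have pv : (f^-1)%VF (A u1 v) \in <<ps>>%VS.
      by rewrite -limg_span (span_basis (vbasisP _)); apply: memv_img; exact: memvf.
    have qc : c \in <<qs>>%VS by rewrite (span_basis (vbasisP _)) memv_cap cK cC.
    have -> : v = k1 + ((f^-1)%VF (A u1 v) + c) by rewrite addrCA -wE /w addrC subrK.
    rewrite /s span_cons span_cat; apply: memv_add => //; exact: memv_add.
  rewrite /s /= size_cat size_map !size_tuple.
  have dK : (\dim K + m)%N = n.
    by rewrite -hdimU -(limg_ker_dim f fullv) capfv hlf hdimV.
  have dC : \dim C = (n - 1)%N by rewrite dimv_compl dim_vline u1nz hdimU.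
  have dKC : \dim (K + C)%VS = n.
    apply/eqP; rewrite eqn_leq -{1}hdimU dimvS ?subvf //= -{1}hdimU.
    by apply: dimvS; rewrite -(addv_complf <[u1]>%VS); apply: addvS.
  have := dimv_sum_cap K C; rewrite dKC dC hdimU hdimV => h.
  lia.
have hsz : size s == n by rewrite (basis_size B) hdimU.
pose b := Tuple hsz.
exists b; split => //; right.
have Fb0 : b`_0 = u1 by [].
have Fbp : forall j, (0 < j <= m)%N -> A u1 b`_j = e`_j.-1.
  case=> // j /andP[_ hj] /=.
  by rewrite nth_cat size_map se hj (nth_map 0) ?se // hfinv.
have Fbq : forall j, (m < j)%N -> A u1 b`_j = 0.
  case=> // j hj /=.
  rewrite nth_cat size_map se ltnNge -ltnS hj /=.
  case: (ltnP (j - m) (size qs)) => h.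
    have := vbasis_mem (mem_nth 0 h); rewrite memv_cap memv_ker hf.
    by case/andP => /eqP.
  by rewrite nth_default // (A0r hlinr).
have inT : forall k i, (k <= m)%N -> (i < k)%N -> e`_i \in take k e.
  move=> k i km ik; rewrite -(nth_take 0 ik); apply: mem_nth.
  by rewrite size_take se; case: (ltnP k m) => // _; apply: leq_trans ik km.
have Gk : forall k, (k <= m)%N ->
    iter k (greedy_step A b) [::] = [seq (0%N, j) | j <- iota 1 k].
  elim=> [|k IH] hk; first by [].
  rewrite iterS IH; last exact: ltnW.
  have [rest hY] := Ysplit (k := k) (N := n) ltac:(clear -hk hn; lia).
  have hmap : map (Aval A b) [seq (0%N, j) | j <- iota 1 k] = take k e.
    apply: (@eq_from_nth _ 0).
      rewrite size_map size_map size_iota size_take se; case: (ltnP k m) => // km.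
      by apply/eqP; rewrite eqn_leq km ltnW.
    move=> i; rewrite size_map size_map size_iota => ik.
    rewrite -map_comp (nth_map 0%N) ?size_iota // nth_iota // nth_take //= /Aval /=.
    by rewrite (Fbp (1 + i)%N) ?add1n //=; apply: leq_trans ik (ltnW hk).
  rewrite (step_eq hY).
  - by rewrite -(addn1 k) iotaD map_cat -cats1 (addnC 1 k).
  - apply/allP => -[i j] /memY /= /andP[ij jk]; rewrite hmap /Aval.
    case: i ij => [|i] ij.
      have hj : A u1 b`_j = e`_j.-1 by rewrite Fbp // ij /= ltnW // (leq_trans jk hk).
      rewrite Fb0 hj; apply: memv_span; apply: inT; first exact: ltnW.
      by case: j ij jk {hj} => // j _ /=.
    have hi : A u1 b`_i.+1 = e`_i by rewrite Fbp //; clear -ij jk hk; lia.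
    have hj : A u1 b`_j = e`_j.-1 by rewrite Fbp //; clear -ij jk hk; lia.
    have fp : free [:: e`_i; e`_j.-1].
      by apply: free_pair => //; rewrite ?se; clear -ij jk hk; lia.
    apply: (subvP (sub_span _)) (Tl hT hi hj fp).
    by move=> v; rewrite !inE => /orP[/eqP->|/eqP->]; apply: inT => //; clear -ij jk hk; lia.
  - rewrite hmap /Aval Fb0 Fbp /=; first by rewrite notin_take // se.
    by rewrite /= hk.
split.
- by move=> p; rewrite /greedyB Gk.
- by move=> i /andP[hi _]; rewrite Fb0 Fbq //; rewrite addn1 in hi.
- by move=> i j hi ij _; apply: (P3 hlinl halt hT hu hm2); apply: Fbq => //; apply: ltn_trans ij.
- move=> i j /andP[i1 im] /andP[mj _]; rewrite Fb0.
  apply: (P4 hT hu hm2); last exact: Fbq.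
  by rewrite Fbp ?i1 ?im //; apply: enz; case: i i1 im.
Qed.
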